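(* Let $\{X_t\}_{t\in\mathbb N^+}$ be a real-valued process adapted to a filtration $\{\mathcal F_t\}_{t\in\mathbb N}$ with $\mathcal F_0$ trivial, such that for all $t\in\mathbb N^+$, $\mathbb E[X_t\mid\mathcal F_{t-1}]=\mu$ (an unknown constant) and $\mathbb E[(X_t-\mu)^2\mid\mathcal F_{t-1}]\le\sigma^2$ ($\sigma^2$ known). Let $\alpha\in(0,1)$ and let $\{\lambda_t\}_{t\in\mathbb N^+}$ be any predictable process. Writing each $\sum$ for $\sum_{i=1}^t$, define $$U_t^+=\frac{\sum\lambda_i^2X_i}{3}-\sum\lambda_i,\qquad U_t^-=\frac{\sum\lambda_i^2X_i}{3}+\sum\lambda_i,$$ $$\mathrm{aCI}^{\mathsf{SN}+}_t=\left(\frac{U_t^+-\sqrt{D_t^+}}{\sum\lambda_i^2/3},\ \frac{U_t^++\sqrt{D_t^+}}{\sum\lambda_i^2/3}\right),\quad D_t^+=(U_t^+)^2-\frac{2\sum\lambda_i^2}{3}\left(\log(2/\alpha)-\sum\lambda_iX_i+\frac{\sum\lambda_i^2X_i^2+2\sigma^2\sum\lambda_i^2}{6}\right),$$ $$\mathrm{aCI}^{\mathsf{SN}-}_t=\left(\frac{U_t^--\sqrt{D_t^-}}{\sum\lambda_i^2/3},\ \frac{U_t^-+\sqrt{D_t^-}}{\sum\lambda_i^2/3}\right),\quad D_t^-=(U_t^-)^2-\frac{2\sum\lambda_i^2}{3}\left(\log(2/\alpha)+\sum\lambda_iX_i+\frac{\sum\lambda_i^2X_i^2+2\sigma^2\sum\lambda_i^2}{6}\right),$$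 with the convention that an interval is empty when the quantity under its square root is negative. Then $$\Pr\left[\forall t\in\mathbb N^+,\ \mu\notin\mathrm{aCI}^{\mathsf{SN}+}_t\right]\ge1-\alpha/2\quad\text{and}\quad\Pr\left[\forall t\in\mathbb N^+,\ \mu\notin\mathrm{aCI}^{\mathsf{SN}-}_t\right]\ge1-\alpha/2.$$
   Context: A process $\{\lambda_t\}$ is predictable if each $\lambda_t$ is $\mathcal F_{t-1}$-measurable. *)

(* Defs.v *)
From HB Require Import structures.
From mathcomp Require Import all_boot all_order all_algebra.
From mathcomp Require Import all_classical all_reals all_analysis.
Set Implicit Arguments. Unset Strict Implicit. Unset Printing Implicit Defensive.
Import Order.TTheory GRing.Theory Num.Theory.
Import numFieldNormedType.Exports.
Local Open Scope classical_set_scope.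
Local Open Scope ring_scope.

Section Defs.
Context {d : measure_display} {T : measurableType d} {R : realType}.

Definition Gmeasurable (G : set (set T)) (f : T -> R) : Prop :=
  forall B : set R, measurable B -> G (f @^-1` B).

Definition filtration (F : nat -> set (set T)) : Prop :=
  (forall n, sigma_algebra setT (F n)) /\
  (forall n, F n `<=` measurable) /\
  (forall n m, (n <= m)%N -> F n `<=` F m).

Definition is_cond_exp (P : probability T R) (G : set (set T)) (X Y : T -> R) : Prop :=
  Gmeasurable G Y /\
  P.-integrable setT (EFin \o X) /\
  P.-integrable setT (EFin \o Y) /\
  (forall A, G A -> (\int[P]_(x in A) (X x)%:E = \int[P]_(x in A) (Y x)%:E)%E).

Definition S (f : nat -> R) (t : nat) : R := \sum_(1 <= i < t.+1) f i.

Section CI.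
Variables (lam X : nat -> T -> R) (alpha sigma : R).

Definition Slam t w := S (fun i => lam i w) t.
Definition Slam2 t w := S (fun i => lam i w ^+ 2) t.
Definition SlamX t w := S (fun i => lam i w * X i w) t.
Definition Slam2X t w := S (fun i => lam i w ^+ 2 * X i w) t.
Definition Slam2X2 t w := S (fun i => lam i w ^+ 2 * X i w ^+ 2) t.

Definition Uplus t w := Slam2X t w / 3 - Slam t w.
Definition Uminus t w := Slam2X t w / 3 + Slam t w.

Definition Dplus t w := Uplus t w ^+ 2 - (2 * Slam2 t w / 3) *
  (ln (2 / alpha) - SlamX t w + (Slam2X2 t w + 2 * sigma ^+ 2 * Slam2 t w) / 6).
Definition Dminus t w := Uminus t w ^+ 2 - (2 * Slam2 t w / 3) *
  (ln (2 / alpha) + SlamX t w + (Slam2X2 t w + 2 * sigma ^+ 2 * Slam2 t w) / 6).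

Definition aCI (U D : R) (s2 : R) : set R :=
  if D < 0 then set0
  else [set x | (U - Num.sqrt D) / (s2 / 3) < x < (U + Num.sqrt D) / (s2 / 3)].

Definition aCIplus t w := aCI (Uplus t w) (Dplus t w) (Slam2 t w).
Definition aCIminus t w := aCI (Uminus t w) (Dminus t w) (Slam2 t w).
End CI.
End Defs.

(* Main.v *)
Require Import Defs.
From HB Require Import structures.
From mathcomp Require Import all_boot all_order all_algebra.
From mathcomp Require Import all_classical all_reals all_analysis.
From mathcomp Require Import measurable_realfun.
From mathcomp Require Import ring lra.
Import Order.TTheory GRing.Theory Num.Theory.
Import numFieldNormedType.Exports.
Local Open Scope classical_set_scope.
Local Open Scope ring_scope.
Section Ineq.
Context {R : realType}.

Lemma is_derive_expRc (f : R -> R) (x df : R) : is_derive x 1 f df ->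
  is_derive x 1 (fun y => expR (f y)) (expR (f x) * df).
Proof.
move=> [fd fv].
have de : derivable expR (f x) 1 by exact: ex_derive.
have dc : derivable (expR \o f) x 1.
  apply/derivable1_diffP; apply: differentiable_comp; exact/derivable1_diffP.
apply: DeriveDef; first exact: dc.
rewrite -derive1E (derive1_comp fd de) !derive1E fv.
by congr (_ * _); apply: derive_val.
Qed.

Definition hh (y : R) := (1 + y + y ^+ 2 / 3) * expR (- y + y ^+ 2 / 6).

Lemma hh_derive (x : R) : is_derive x 1 hh (expR (- x + x ^+ 2 / 6) * (x ^+ 3 / 9)).
Proof.
have d1 : is_derive x 1 (fun y : R => - y + y ^+ 2 / 6) (- 1 + x / 3).
  apply: is_derive_eq.
  rewrite !scaler0 add0r /GRing.scale /= !mulr1.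
  by field.
have d2 : is_derive x 1 (fun y : R => 1 + y + y ^+ 2 / 3) (1 + 2 * x / 3).
  apply: is_derive_eq.
  rewrite !scaler0 ?add0r ?addr0 /GRing.scale /= !mulr1.
  by field.
have d3 := is_derive_expRc _ _ _ d1.
have := is_deriveM d2 d3.
have -> : ((fun y : R => 1 + y + y ^+ 2 / 3) * (fun y => expR (- y + y ^+ 2 / 6))) = hh.
  by apply/funext => y.
move=> h; apply: is_derive_eq.
rewrite /GRing.scale /=.
by field.
Qed.
Lemma hh_dvbl x : derivable hh x 1.
Proof. by case: (hh_derive x). Qed.

Lemma hh_cont : continuous hh.
Proof.
move=> x; apply: differentiable_continuous; apply/derivable1_diffP.
exact: hh_dvbl.
Qed.

Lemma hh_der1 (x : R) : derive1 hh x = expR (- x + x ^+ 2 / 6) * (x ^+ 3 / 9).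
Proof. by rewrite derive1E; exact: (@derive_val _ _ _ _ _ _ _ (hh_derive x)). Qed.

Lemma hh0 : hh 0 = 1.
Proof. by rewrite /hh expr0n /= oppr0 !mul0r !addr0 expR0 mulr1. Qed.

Lemma hh_ge1 y : 1 <= hh y.
Proof.
have dv : forall (a b : R) x, x \in `]a, b[ -> derivable hh x 1.
  by move=> a b x _; exact: hh_dvbl.
have ct : forall (a b : R), {within `[a, b], continuous hh}.
  by move=> a b; exact: continuous_subspaceT hh_cont.
rewrite -hh0; have [y0|y0] := leP 0 y.
  have d0 : forall x, x \in `]0, y[ -> 0 <= derive1 hh x.
    move=> x; rewrite in_itv /= => /andP[x0 _]; rewrite hh_der1.
    by rewrite mulr_ge0 ?expR_ge0 // divr_ge0 // exprn_ge0 // ltW.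
  exact: (ger0_derive1_ndecr (dv 0 y) d0 (ct 0 y)).
have d0 : forall x, x \in `]y, 0[ -> derive1 hh x <= 0.
  move=> x; rewrite in_itv /= => /andP[_ x0]; rewrite hh_der1.
  rewrite mulr_ge0_le0 ?expR_ge0 //.
  have h2 : 0 <= x ^+ 2 := sqr_ge0 x.
  nra.
exact: (@ler0_derive1_nincr R hh y 0 (dv y 0) d0 (ct y 0) y 0 (lexx y) (ltW y0) (lexx 0)).
Qed.

Lemma key_ineq (y : R) : expR (y - y ^+ 2 / 6) <= 1 + y + y ^+ 2 / 3.
Proof.
have h := hh_ge1 y; rewrite /hh in h.
have e : expR (y - y ^+ 2 / 6) * expR (- y + y ^+ 2 / 6) = 1.
  rewrite -expRD (_ : _ + _ = 0) ?expR0 //; ring.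
have ep : 0 < expR (- y + y ^+ 2 / 6) by exact: expR_gt0.
rewrite -(ler_pM2r ep) e; exact: h.
Qed.
End Ineq.

Lemma bnd_aux {R : realType} (l s E : R) : 0 < s -> 0 <= E ->
  E * (1 + l ^+ 2 * s / 3) <= 1 -> `|E * l| <= 1 + 3 / s /\ E * l ^+ 2 / 3 <= 1 / s.
Proof.
move=> s0 E0 h.
have r0 : 0 < 1 / s by rewrite divr_gt0.
have sr : s * (1 / s) = 1 by rewrite mulrC divfK // gt_eqF.
set r := 1 / s in r0 sr *.
have e3 : 3 / s = 3 * r by rewrite /r mulrA mulr1.
rewrite e3.
have hl : `|l| <= 1 + l ^+ 2.
  have ha : l ^+ 2 = `|l| ^+ 2 by rewrite real_normK ?num_real.
  have := sqr_ge0 (`|l| - 1); rewrite ha; nra.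
have h0 : 0 <= E * l ^+ 2 * s by apply: mulr_ge0; [apply: mulr_ge0 => //; exact: sqr_ge0 | exact: ltW].
have h1 : E * l ^+ 2 * s <= 3 * (1 - E) by lra.
have h2 : E * l ^+ 2 = E * l ^+ 2 * s * r by rewrite -[E * l ^+ 2 * s * r]mulrA sr mulr1.
have h3 : E * l ^+ 2 * s * r <= 3 * (1 - E) * r by rewrite ler_pM2r.
have E1 : E <= 1 by lra.
have Er : 0 <= E * r by rewrite mulr_ge0 // ltW.
split.
  rewrite normrM ger0_norm //.
  have h4 : E * `|l| <= E * (1 + l ^+ 2) by rewrite ler_wpM2l.
  lra.
lra.
Qed.

Lemma mexpR {d0 : measure_display} {T0 : measurableType d0} {R : realType} (D : set T0) (f : T0 -> R) :
  measurable_fun D f -> measurable_fun D (fun x => expR (f x)).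
Proof. by move=> mf; apply: (measurable_comp measurableT) => //; exact: measurable_expR. Qed.

Ltac mfun := repeat first [ assumption | exact: measurable_cst
  | apply: measurable_funB | apply: measurable_funD | apply: measurable_funM
  | apply: measurable_funX | apply: mexpR
  | apply: measurable_funN ].

Section Meas.
Context {d : measure_display} {T : measurableType d} {R : realType}.
Variable (P : probability T R) (F : nat -> set (set T)).
Hypothesis hF : filtration F.

Definition Gm n (f : T -> R) :=
  measurable_fun [set: g_sigma_algebraType (F n)] (f : g_sigma_algebraType (F n) -> R).

Lemma F_sa n : sigma_algebra setT (F n). Proof. by case: hF. Qed.
Lemma F_meas n A : F n A -> measurable A. Proof. by case: hF => _ [h _]; exact: h. Qed.
Lemma F_mono m n : (m <= n)%N -> F m `<=` F n. Proof. by case: hF => _ [_ h]; exact: h. Qed.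
Lemma FT n : F n setT.
Proof. by have [_ h _] := F_sa n; rewrite -(setD0 setT); apply: h; case: (F_sa n). Qed.

Lemma Gm_iff n f : Gmeasurable (F n) f <-> Gm n f.
Proof.
rewrite /Gm /Gmeasurable; split => h.
  move=> _ B mB; rewrite setTI.
  have := h B mB.
  rewrite -[X in X _ -> _](sigma_algebra_id (F_sa n)).
  done.
move=> B mB; have := h (measurableT) B mB; rewrite setTI.
by rewrite -[X in _ -> X _](sigma_algebra_id (F_sa n)).
Qed.

Lemma Gm_set n f B : Gm n f -> measurable B -> F n (f @^-1` B).
Proof. by move/Gm_iff; apply. Qed.

Lemma Gm_meas n f : Gm n f -> measurable_fun setT f.
Proof. by move=> h _ B mB; rewrite setTI; apply: (F_meas n); exact: Gm_set. Qed.

Lemma Gm_mono m n f : (m <= n)%N -> Gm m f -> Gm n f.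
Proof. by move=> mn /Gm_iff h; apply/Gm_iff => B mB; apply: (F_mono m n mn); exact: h. Qed.

Lemma Gm_indic n A : F n A -> Gm n (\1_A).
Proof.
move=> FA; apply: (@measurable_indic _ (g_sigma_algebraType (F n))).
rewrite -[X in X _](sigma_algebra_id (F_sa n)) in FA.
exact: FA.
Qed.


Local Notation Int f := (P.-integrable setT (EFin \o f)).

Lemma bnd_of (h : T -> R) B : (forall x, `|h x| <= B) -> [bounded h x | x in setT].
Proof.
move=> hB; rewrite /bounded_near; near=> M => t _ /=.
apply: le_trans (hB t) _; near: M; apply: nbhs_pinfty_ge; exact: num_real.
Unshelve. all: end_near. Qed.

Lemma int_bnd (h : T -> R) B : measurable_fun setT h -> (forall x, `|h x| <= B) -> Int h.
Proof.
move=> mh hB; apply: measurable_bounded_integrable => //.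
all: try exact: (bnd_of _ _ hB).
by rewrite (le_lt_trans (probability_le1 P measurableT)) ?ltry.
Qed.

Lemma int_bmul (h f : T -> R) B : measurable_fun setT h -> (forall x, `|h x| <= B) ->
  Int f -> Int (fun x => h x * f x).
Proof.
move=> mh hB fi.
have := @integrableMl _ _ _ P setT measurableT (EFin \o f) h fi mh (bnd_of _ _ hB).
apply: eq_integrable => // x _ /=.
by rewrite -EFinM mulrC.
Qed.

Lemma Rint_indic (A : set T) : measurable A -> \int[P]_x (\1_A x : R) = fine (P A).
Proof.
move=> mA; rewrite /Rintegral integral_indic // setIT //.
Qed.


Lemma indic1 (B : set T) x : B x -> (\1_B x : R) = 1.
Proof. by move=> h; rewrite /indic mem_set. Qed.
Lemma indic0' (B : set T) x : ~ B x -> (\1_B x : R) = 0.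
Proof. by move=> h; rewrite /indic (memNset h). Qed.
Lemma indic_ge0 (B : set T) x : 0 <= (\1_B x : R).
Proof. by rewrite /indic ler0n. Qed.
Lemma indic_le1 (B : set T) x : (\1_B x : R) <= 1.
Proof. by rewrite /indic lern1 leq_b1. Qed.

Lemma Int_ext (h k : T -> R) : (forall x, h x = k x) -> Int h -> Int k.
Proof. by move=> hk; apply: eq_integrable => // x _ /=; rewrite hk. Qed.

Lemma IntD (h k : T -> R) : Int h -> Int k -> Int (fun x => h x + k x).
Proof. by move=> hi ki; apply: eq_integrable (integrableD _ hi ki) => // x _. Qed.

Lemma IntB (h k : T -> R) : Int h -> Int k -> Int (fun x => h x - k x).
Proof. by move=> hi ki; apply: eq_integrable (integrableB _ hi ki) => // x _. Qed.

Fixpoint cnt (A : nat -> set T) (N : nat) (x : T) : R :=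
  if N is N'.+1 then cnt A N' x + \1_(A N') x else 0.

Lemma cnt_bnd A N x : 0 <= cnt A N x <= N%:R.
Proof.
elim: N => [|N /andP[h1 h2]] /=; first by rewrite lexx.
rewrite addr_ge0 ?indic_ge0 //= -natr1 lerD //; exact: indic_le1.
Qed.

Section EXT.
Variables (n : nat) (f g : T -> R).
Hypothesis fi : Int f.
Hypothesis gi : Int g.
Hypothesis hfg : forall A, F n A ->
  (\int[P]_(x in A) (f x)%:E = \int[P]_(x in A) (g x)%:E)%E.

Lemma ind_eq A : F n A -> \int[P]_x (\1_A x * f x) = \int[P]_x (\1_A x * g x).
Proof.
move=> FA; have h := hfg A FA.
have e : forall k : T -> R, \int[P]_x (\1_A x * k x) = \int[P]_(x in A) k x.
  move=> k; rewrite [RHS]Rintegral_mkcond; apply: eq_Rintegral => x _.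
  by rewrite /patch /indic; case: ifP => _; rewrite ?mul1r ?mul0r.
by rewrite !e /Rintegral h.
Qed.

Lemma cnt_Gm A N : (forall j, F n (A j)) -> Gm n (cnt A N).
Proof.
move=> FA; elim: N => [|N IH] /=; first exact: measurable_cst.
apply: measurable_funD => //; exact: Gm_indic.
Qed.

Lemma cnt_eq A N : (forall j, F n (A j)) ->
  \int[P]_x (cnt A N x * f x) = \int[P]_x (cnt A N x * g x).
Proof.
move=> FA; elim: N => [|N IH] /=.
  by rewrite (eq_Rintegral _ (fun x _ => mul0r (f x))) (eq_Rintegral _ (fun x _ => mul0r (g x))).
have mc := Gm_meas _ _ (cnt_Gm A N FA).
have mi : measurable_fun setT (\1_(A N) : T -> R).
  by apply: measurable_indic; apply: (F_meas n); exact: FA.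
have bc : forall x, `|cnt A N x| <= N%:R.
  by move=> x; have /andP[h1 h2] := cnt_bnd A N x; rewrite ger0_norm.
have bi : forall x, `|(\1_(A N) x : R)| <= 1.
  by move=> x; rewrite ger0_norm ?indic_ge0 ?indic_le1.
rewrite (eq_Rintegral _ (fun x _ => mulrDl _ _ (f x))).
rewrite (eq_Rintegral _ (fun x _ => mulrDl _ _ (g x))).
rewrite !RintegralD //; first by rewrite IH ind_eq.
- exact: int_bmul mc bc gi.
- exact: int_bmul mi bi gi.
- exact: int_bmul mc bc fi.
- exact: int_bmul mi bi fi.
Qed.


Lemma cnt_approx (psi : T -> R) (dl : R) x : 0 < dl -> 0 <= psi x ->
  forall N, (N%:R * dl <= psi x -> cnt (fun j : nat => [set y | j.+1%:R * dl <= psi y]) N x = N%:R) /\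
  (psi x < N%:R * dl -> psi x - dl < dl * cnt (fun j : nat => [set y | j.+1%:R * dl <= psi y]) N x <= psi x).
Proof.
move=> d0 p0; elim=> [|N [IH1 IH2]] /=.
  by split => // h; exfalso; rewrite mul0r in h; lra.
have e1 : N.+1%:R = N%:R + 1 :> R by rewrite -addn1 natrD.
have [hN|hN] := leP (N.+1%:R * dl) (psi x).
  have hN' : N%:R * dl <= psi x by apply: le_trans hN; rewrite e1; nra.
  rewrite indic1 // IH1 // -e1; split => // h; exfalso; lra.
rewrite indic0' /=; last by move=> h; lra.
rewrite addr0; split => [h|_]; first by exfalso; lra.
have [hN'|hN'] := leP (N%:R * dl) (psi x); last exact: IH2.
rewrite IH1 //; rewrite e1 in hN; apply/andP; split; nra.
Qed.

Lemma ext0 (psi : T -> R) B : Gm n psi -> (forall x, 0 <= psi x <= B) ->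
  \int[P]_x (psi x * f x) = \int[P]_x (psi x * g x).
Proof.
move=> mpsi hb.
have mpsiT := Gm_meas _ _ mpsi.
have B0 : 0 <= B by have /andP[h1 h2] := hb point; exact: le_trans h2.
set C := \int[P]_x `|f x| + \int[P]_x `|g x|.
have C0 : 0 <= C by rewrite addr_ge0 // Rintegral_ge0.
set Dl := \int[P]_x (psi x * f x) - \int[P]_x (psi x * g x).
suff H : forall dl, 0 < dl -> `|Dl| <= dl * C.
  apply/eqP; rewrite -subr_eq0 -/Dl -normr_eq0; apply/eqP.
  have H' : forall e, 0 < e -> `|Dl| <= e.
    move=> e e0; have c1 : 0 < C + 1 by lra.
    apply: le_trans (H (e / (C + 1)) _) _; first by rewrite divr_gt0.
    rewrite mulrAC ler_pdivrMr //; nra.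
  apply/eqP; rewrite eq_le normr_ge0 andbT leNgt; apply/negP => hp.
  have := H' (`|Dl| / 2) (divr_gt0 hp (ltr0Sn _ 1)); lra.
move=> dl d0.
pose A := fun j : nat => [set y | j.+1%:R * dl <= psi y].
have FA : forall j, F n (A j).
  move=> j; have -> : A j = psi @^-1` `[j.+1%:R * dl, +oo[%classic.
    by apply/funext => y; rewrite /A /preimage /= in_itv /= andbT.
  exact: Gm_set _ _ _ mpsi (measurable_itv _).
pose N := (Num.truncn (B / dl)).+1.
have BN : B < N%:R * dl by rewrite -ltr_pdivrMr // truncnS_gt.
pose phi x := dl * cnt A N x.
have mphi : measurable_fun setT phi.
  apply: measurable_funM; first exact: measurable_cst.
  exact: Gm_meas _ _ (cnt_Gm A N FA).
have bd : forall x, `|psi x - phi x| <= dl.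
  move=> x; have /andP[p0 pB] := hb x.
  have [_ /(_ (le_lt_trans pB BN)) /andP[h1 h2]] := cnt_approx psi dl x d0 p0 N.
  rewrite ger0_norm /phi; lra.
have bpsi : forall x, `|psi x| <= B.
  by move=> x; have /andP[p0 pB] := hb x; rewrite ger0_norm.
have bphi : forall x, `|phi x| <= dl * N%:R.
  move=> x; have /andP[c0 cN] := cnt_bnd A N x.
  by rewrite /phi normrM ger0_norm ?(ltW d0) // ger0_norm // ler_wpM2l // ltW.
have key : forall h : T -> R, Int h ->
    `|\int[P]_x (psi x * h x) - \int[P]_x (phi x * h x)| <= dl * \int[P]_x `|h x|.
  move=> h hi.
  have i1 : Int (fun x => psi x * h x) := int_bmul _ _ _ mpsiT bpsi hi.
  have i2 : Int (fun x => phi x * h x) := int_bmul _ _ _ mphi bphi hi.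
  rewrite -RintegralB //.
  have i3 : Int (fun x => psi x * h x - phi x * h x).
    by apply: (Int_ext (fun x => (psi x - phi x) * h x)) => [x|]; [rewrite mulrBl | exact: int_bmul _ _ _ (measurable_funB mpsiT mphi) bd hi].
  apply: le_trans (le_normr_Rintegral _ _) _ => //.
  have i4 : Int (fun x => `|h x|) by exact: integrable_norm.
  rewrite -RintegralZl //.
  apply: le_Rintegral => //.
  - exact: integrable_norm.
  - by apply: (Int_ext (fun x => dl * `|h x|)) => // ; apply: int_bmul i4; [exact: measurable_cst | move=> x; exact: lexx].
  - move=> x _; rewrite -mulrBl normrM ler_wpM2r //; exact: bd.
have eqphi : \int[P]_x (phi x * f x) = \int[P]_x (phi x * g x).
  have mc := Gm_meas _ _ (cnt_Gm A N FA).
  have bc : forall x, `|cnt A N x| <= N%:R.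
    by move=> x; have /andP[h1 h2] := cnt_bnd A N x; rewrite ger0_norm.
  rewrite /phi (eq_Rintegral _ (fun x _ => esym (mulrA dl (cnt A N x) (f x)))).
  rewrite (eq_Rintegral _ (fun x _ => esym (mulrA dl (cnt A N x) (g x)))).
  rewrite !RintegralZl //; first by rewrite (cnt_eq A N FA).
  - exact: int_bmul mc bc gi.
  - exact: int_bmul mc bc fi.
have -> : Dl = (\int[P]_x (psi x * f x) - \int[P]_x (phi x * f x)) -
   (\int[P]_x (psi x * g x) - \int[P]_x (phi x * g x)).
  by rewrite /Dl eqphi; ring.
apply: le_trans (ler_normB _ _) _.
rewrite /C mulrDr; apply: lerD; exact: key.
Qed.

Lemma ext (psi : T -> R) B : Gm n psi -> (forall x, `|psi x| <= B) ->
  \int[P]_x (psi x * f x) = \int[P]_x (psi x * g x).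
Proof.
move=> mpsi hb.
have mpsiT := Gm_meas _ _ mpsi.
have h := ext0 (fun x => psi x + B) (B + B).
have : \int[P]_x ((psi x + B) * f x) = \int[P]_x ((psi x + B) * g x).
  apply: h.
    by apply: measurable_funD => //; exact: measurable_cst.
  by move=> x; have := hb x; rewrite ler_norml => /andP[h1 h2]; apply/andP; split; lra.
rewrite (eq_Rintegral _ (fun x _ => mulrDl (psi x) B (f x))).
rewrite (eq_Rintegral _ (fun x _ => mulrDl (psi x) B (g x))).
have bB : forall x : T, `|B| <= `|B| by move=> x.
rewrite !RintegralD //; last first.
all: first [exact: (int_bmul (cst B) f _ (measurable_cst B) bB fi)
  | exact: (int_bmul (cst B) g _ (measurable_cst B) bB gi)
  | exact: (int_bmul psi f _ mpsiT hb fi)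
  | exact: (int_bmul psi g _ mpsiT hb gi) | idtac].
rewrite !RintegralZl //.
have -> : \int[P]_x f x = \int[P]_x g x by rewrite /Rintegral (hfg _ (FT n)).
by move/addIr.
Qed.

End EXT.


Lemma Rint_ae_eq (f g : T -> R) : measurable_fun setT f -> measurable_fun setT g ->
  {ae P, forall x, f x = g x} -> \int[P]_x f x = \int[P]_x g x.
Proof.
move=> mf mg h; rewrite /Rintegral; congr fine.
apply: ae_eq_integral => //; try exact/measurable_EFinP.
by apply: filterS h => x hx _ /=; rewrite hx.
Qed.

Lemma Rint_ae_le (f g : T -> R) : Int f -> Int g ->
  {ae P, forall x, f x <= g x} -> \int[P]_x f x <= \int[P]_x g x.
Proof.
move=> fi gi h; rewrite -subr_ge0 -RintegralB //.
have mf : measurable_fun setT f by exact/measurable_EFinP/(measurable_int _ fi).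
have mg : measurable_fun setT g by exact/measurable_EFinP/(measurable_int _ gi).
rewrite (@Rint_ae_eq _ (fun x => Num.max (g x - f x) 0)).
- by apply: Rintegral_ge0 => x _; rewrite le_max lexx orbT.
- exact: measurable_funB.
- by apply: measurable_maxr; [exact: measurable_funB | exact: measurable_cst].
- by apply: filterS h => x hx; rewrite max_l // subr_ge0.
Qed.


Section Super.
Variables (X lam : nat -> T -> R) (mu s : R).
Hypothesis hs : 0 <= s.
Hypothesis hX : forall t, (0 < t)%N -> Gm t (X t).
Hypothesis hmu : forall t, (0 < t)%N -> is_cond_exp P (F t.-1) (X t) (fun _ => mu).
Hypothesis hvar : forall t, (0 < t)%N -> exists Y : T -> R,
  is_cond_exp P (F t.-1) (fun w => (X t w - mu) ^+ 2) Y /\ {ae P, forall w, Y w <= s}.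
Hypothesis hlam : forall t, (0 < t)%N -> Gm t.-1 (lam t).

Definition Z t w := lam t w * (X t w - mu) - (lam t w * (X t w - mu)) ^+ 2 / 6
  - lam t w ^+ 2 * s / 3.

Lemma Z_expand t w : Z t w = lam t w * X t w - mu * lam t w -
  (lam t w ^+ 2 * X t w ^+ 2 - 2 * mu * (lam t w ^+ 2 * X t w) + mu ^+ 2 * lam t w ^+ 2
   + 2 * s * lam t w ^+ 2) / 6.
Proof. by rewrite /Z; field. Qed.

Lemma Z_le t w : Z t w <= 3 / 2.
Proof.
rewrite /Z; set y := lam t w * (X t w - mu).
have h1 := sqr_ge0 (y - 3).
have h2 : 0 <= lam t w ^+ 2 * s by rewrite mulr_ge0 ?sqr_ge0.
lra.
Qed.

Lemma Z_Gm t : (0 < t)%N -> Gm t (Z t).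
Proof.
move=> t0.
have ml : Gm t (lam t) by apply: (Gm_mono t.-1 t) => //; [exact: leq_pred | exact: hlam].
have mX := hX t t0.
rewrite /Z.
repeat first [ assumption | exact: measurable_cst | apply: measurable_funB
  | apply: measurable_funM | apply: measurable_funX ].
Qed.


Lemma super k (H : T -> R) B : Gm k H -> (forall x, 0 <= H x <= B) ->
  \int[P]_x (H x * expR (Z k.+1 x)) <= \int[P]_x H x.
Proof.
move=> mH hb.
have mHT := Gm_meas _ _ mH.
have B0 : 0 <= B by have /andP[h1 h2] := hb point; exact: le_trans h2.
have bH : forall x, `|H x| <= B by move=> x; have /andP[h1 h2] := hb x; rewrite ger0_norm.
have ml : Gm k (lam k.+1) := hlam k.+1 isT.
have mlT := Gm_meas _ _ ml.
have mXT := Gm_meas _ _ (hX k.+1 isT).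
have mZT := Gm_meas _ _ (Z_Gm k.+1 isT).
have [_ [Xi [mui hXmu]]] := hmu k.+1 isT.
have [Y [[mY [Vi [Yi hVY]]] Yle]] := hvar k.+1 isT.
simpl in hXmu, hVY, mY.
have mYT := Gm_meas _ _ (proj1 (Gm_iff _ _) mY).
have bHZ : forall x, `|H x * expR (Z k.+1 x)| <= B * expR (3 / 2).
  move=> x; rewrite normrM (ger0_norm (expR_ge0 _)).
  apply: ler_pM; [exact: normr_ge0 | exact: expR_ge0 | exact: bH | ].
  by rewrite ler_expR Z_le.
have iHZ : Int (fun x => H x * expR (Z k.+1 x)).
  have mm : measurable_fun setT (fun x => H x * expR (Z k.+1 x)).
    by mfun.
  exact: (int_bnd _ _ mm bHZ).
move: hs; rewrite le_eqVlt => /predU1P[s0|s0].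
  have eV : \int[P]_x ((X k.+1 x - mu) ^+ 2) = \int[P]_x Y x.
    by rewrite /Rintegral (hVY _ (FT k)).
  have i0 : Int (fun _ : T => s) by apply: (int_bnd _ `|s|) => [|x]; [exact: measurable_cst | ].
  have leY : \int[P]_x Y x <= \int[P]_x s := Rint_ae_le _ _ Yi i0 Yle.
  rewrite Rintegral_cst // -s0 mul0r in leY.
  have mV2 : measurable_fun setT (fun x => (X k.+1 x - mu) ^+ 2) by mfun.
  have V20 : \int[P]_x ((X k.+1 x - mu) ^+ 2) = 0.
    apply/eqP; rewrite eq_le eV leY /=; rewrite -eV; apply: Rintegral_ge0 => x _; exact: sqr_ge0.
  have ae0 : ae_eq P setT (fun x => ((X k.+1 x - mu) ^+ 2)%:E) (cst 0%E).
    apply/(ae_eq_integral_abs _ measurableT); first exact/measurable_EFinP.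
    rewrite (eq_integral (fun x => ((X k.+1 x - mu) ^+ 2)%:E)); last first.
      by move=> x _; rewrite gee0_abs // lee_fin sqr_ge0.
    have := integrable_fin_num measurableT Vi.
    move/fineK => <-; rewrite -/(Rintegral P setT _) V20 //.
  rewrite (@Rint_ae_eq (fun x => H x * expR (Z k.+1 x)) (fun x => H x)) //; first by mfun.
  apply: filterS ae0 => x /(_ I) /= /eqP; rewrite eqe sqrf_eq0 subr_eq0 => /eqP hx.
  by rewrite /Z hx subrr !mulr0 -s0 expr0n /= mul0r !mulr0 !subr0 mul0r subr0 expR0 mulr1.
pose E x := expR (- (lam k.+1 x ^+ 2 * s / 3)).
pose Q x := H x * E x.
have hE : forall x, E x * (1 + lam k.+1 x ^+ 2 * s / 3) <= 1.
  move=> x; have e : E x * expR (lam k.+1 x ^+ 2 * s / 3) = 1 by rewrite /E -expRD addNr expR0.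
  rewrite -[leRHS]e; apply: ler_wpM2l; [exact: expR_ge0 | exact: expR_ge1Dx].
have E0 : forall x, 0 <= E x by move=> x; exact: expR_ge0.
have u0 : forall x, 0 <= lam k.+1 x ^+ 2 * s / 3.
  by move=> x; rewrite mulr_ge0 // mulr_ge0 ?sqr_ge0 // ltW.
have E1 : forall x, E x <= 1.
  move=> x; have := hE x; have := E0 x; have := u0 x; nra.
have bnds := fun x => bnd_aux (lam k.+1 x) s (E x) s0 (E0 x) (hE x).
have mE : Gm k E by rewrite /E; mfun.
have mQ : Gm k Q by rewrite /Q; mfun.
have mQl : Gm k (fun x => Q x * lam k.+1 x) by mfun.
have mQl2 : Gm k (fun x => Q x * lam k.+1 x ^+ 2 / 3) by mfun.
have mQT := Gm_meas _ _ mQ.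
have mQlT := Gm_meas _ _ mQl.
have mQl2T := Gm_meas _ _ mQl2.
have bQ : forall x, `|Q x| <= B.
  move=> x; rewrite /Q normrM (ger0_norm (E0 x)); have /andP[h0 hB] := hb x.
  have := E0 x; have := E1 x; rewrite ger0_norm //; nra.
have bQl : forall x, `|Q x * lam k.+1 x| <= B * (1 + 3 / s).
  move=> x; rewrite /Q -mulrA normrM; apply: ler_pM; [exact: normr_ge0 | exact: normr_ge0 | exact: bH | exact: (bnds x).1].
have bQl2 : forall x, `|Q x * lam k.+1 x ^+ 2 / 3| <= B * (1 / s).
  move=> x; rewrite /Q -!mulrA normrM; apply: ler_pM; [exact: normr_ge0 | exact: normr_ge0 | exact: bH | ].
  rewrite ger0_norm; first by move: (bnds x).2; rewrite !mulrA.
  rewrite [lam k.+1 x * (_ / 3)]mulrA -expr2; apply: mulr_ge0; [exact: E0 | apply: divr_ge0; [exact: sqr_ge0 | by []]].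
have iQ : Int Q := int_bnd _ _ mQT bQ.
have iQlX : Int (fun x => Q x * lam k.+1 x * X k.+1 x) := int_bmul _ _ _ mQlT bQl Xi.
have iQlm : Int (fun x => Q x * lam k.+1 x * mu) := int_bmul _ _ _ mQlT bQl mui.
have iQlV : Int (fun x => Q x * lam k.+1 x ^+ 2 / 3 * (X k.+1 x - mu) ^+ 2) := int_bmul _ _ _ mQl2T bQl2 Vi.
have iQlY : Int (fun x => Q x * lam k.+1 x ^+ 2 / 3 * Y x) := int_bmul _ _ _ mQl2T bQl2 Yi.
have ics : Int (fun _ : T => s) by apply: (int_bnd _ `|s|) => [|x]; [exact: measurable_cst | ].
have iQls : Int (fun x => Q x * lam k.+1 x ^+ 2 / 3 * s) := int_bmul _ _ _ mQl2T bQl2 ics.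
have pt : forall x, H x * expR (Z k.+1 x) <= Q x + (Q x * lam k.+1 x * X k.+1 x
    - Q x * lam k.+1 x * mu) + Q x * lam k.+1 x ^+ 2 / 3 * (X k.+1 x - mu) ^+ 2.
  move=> x; set y := lam k.+1 x * (X k.+1 x - mu).
  have ez : expR (Z k.+1 x) = expR (y - y ^+ 2 / 6) * E x.
    by rewrite /E -expRD /Z -/y.
  have hQ : 0 <= Q x by rewrite /Q mulr_ge0 //; have /andP[] := hb x.
  rewrite ez mulrA -/(Q x).
  have -> : Q x + (Q x * lam k.+1 x * X k.+1 x - Q x * lam k.+1 x * mu) +
      Q x * lam k.+1 x ^+ 2 / 3 * (X k.+1 x - mu) ^+ 2 = Q x * (1 + y + y ^+ 2 / 3).
    by rewrite /y; ring.
  rewrite /Q mulrAC -/(Q x); apply: ler_wpM2l => //; exact: key_ineq.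
have iR := IntD _ _ (IntD _ _ iQ (IntB _ _ iQlX iQlm)) iQlV.
have s1 := le_Rintegral measurableT iHZ iR (fun x _ => pt x).
rewrite RintegralD // in s1; last exact: (IntD _ _ iQ (IntB _ _ iQlX iQlm)).
rewrite RintegralD // in s1; last exact: (IntB _ _ iQlX iQlm).
rewrite RintegralB // in s1.
have e2 : \int[P]_x (Q x * lam k.+1 x * X k.+1 x) = \int[P]_x (Q x * lam k.+1 x * mu).
  exact: (ext k (X k.+1) (fun _ => mu) Xi mui hXmu (fun x => Q x * lam k.+1 x) _ mQl bQl).
have e3 : \int[P]_x (Q x * lam k.+1 x ^+ 2 / 3 * (X k.+1 x - mu) ^+ 2) =
    \int[P]_x (Q x * lam k.+1 x ^+ 2 / 3 * Y x).
  exact: (ext k (fun x => (X k.+1 x - mu) ^+ 2) Y Vi Yi hVY (fun x => Q x * lam k.+1 x ^+ 2 / 3) _ mQl2 bQl2).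
have e4 : \int[P]_x (Q x * lam k.+1 x ^+ 2 / 3 * Y x) <= \int[P]_x (Q x * lam k.+1 x ^+ 2 / 3 * s).
  apply: Rint_ae_le => //; apply: filterS Yle => x hx; apply: ler_wpM2l => //.
  apply: mulr_ge0; last by [].
  apply: mulr_ge0; last exact: sqr_ge0.
  by rewrite /Q mulr_ge0 //; have /andP[] := hb x.
have e5 : \int[P]_x Q x + \int[P]_x (Q x * lam k.+1 x ^+ 2 / 3 * s) <= \int[P]_x H x.
  rewrite -RintegralD //; apply: le_Rintegral => //.
    exact: IntD.
    exact: (int_bnd _ _ mHT bH).
  move=> x _; have /andP[h0 _] := hb x.
  have -> : Q x + Q x * lam k.+1 x ^+ 2 / 3 * s = H x * (E x * (1 + lam k.+1 x ^+ 2 * s / 3)).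
    by rewrite /Q; ring.
  by rewrite -[leRHS]mulr1; apply: ler_wpM2l.
lra.
Qed.

Definition L t w := S (fun i => Z i w) t.
Definition M t w := expR (L t w).

Lemma L0 w : L 0 w = 0. Proof. by rewrite /L /S big_geq. Qed.
Lemma LS t w : L t.+1 w = L t w + Z t.+1 w. Proof. by rewrite /L /S big_nat_recr. Qed.
Lemma M0 w : M 0 w = 1. Proof. by rewrite /M L0 expR0. Qed.
Lemma MS t w : M t.+1 w = M t w * expR (Z t.+1 w). Proof. by rewrite /M LS expRD. Qed.

Lemma L_Gm t : Gm t (L t).
Proof.
elim: t => [|t IH].
  have -> : L 0 = cst 0 by apply/funext => w; rewrite L0.
  exact: measurable_cst.
have -> : L t.+1 = (fun w => L t w + Z t.+1 w) by apply/funext => w; rewrite LS.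
apply: measurable_funD; first exact: (Gm_mono t t.+1) (leqnSn t) IH.
exact: Z_Gm.
Qed.

Lemma M_Gm t : Gm t (M t). Proof. exact: mexpR (L_Gm t). Qed.

Lemma L_le t w : L t w <= t%:R * (3 / 2).
Proof.
elim: t => [|t IH]; first by rewrite L0 mul0r.
by rewrite LS -natr1 mulrDl mul1r lerD // Z_le.
Qed.

Lemma M_bnd t w : 0 <= M t w <= expR (t%:R * (3 / 2)).
Proof. by rewrite expR_ge0 /= /M ler_expR L_le. Qed.

Section Ville.
Variable c : R.
Hypothesis c0 : 0 < c.

Fixpoint Ev (n : nat) : set T :=
  if n is n'.+1 then Ev n' `&` [set w | M n'.+1 w <= c] else setT.

Lemma F_I n A B : F n A -> F n B -> F n (A `&` B).
Proof.
rewrite -[X in X A -> _](sigma_algebra_id (F_sa n)).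
rewrite -[X in X B -> _](sigma_algebra_id (F_sa n)).
rewrite -[X in _ -> _ -> X _](sigma_algebra_id (F_sa n)).
exact: (@measurableI _ (g_sigma_algebraType (F n))).
Qed.

Lemma Ev_F n : F n (Ev n).
Proof.
elim: n => [|n IH] /=; first exact: FT.
apply: F_I; first exact: (F_mono n n.+1 (leqnSn n)).
have -> : [set w | M n.+1 w <= c] = M n.+1 @^-1` `]-oo, c]%classic.
  by apply/funext => y; rewrite /preimage /= in_itv.
exact: Gm_set _ _ _ (M_Gm n.+1) (measurable_itv _).
Qed.

Lemma Ev_meas n : measurable (Ev n). Proof. exact: (F_meas n) (Ev_F n). Qed.

Lemma Ev_dec m n : (m <= n)%N -> Ev n `<=` Ev m.
Proof.
elim: n => [|n IH] mn; first by case: m mn.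
rewrite leq_eqVlt in mn; case/orP: mn => [/eqP->//|mn].
by move=> x [hx _]; exact: IH.
Qed.

Definition fv n x := M n x * \1_(Ev n) x + c * \1_(~` Ev n) x.

Lemma fv_meas n : measurable_fun setT (fv n).
Proof.
have mM := Gm_meas _ _ (M_Gm n).
have mI : measurable_fun setT (\1_(Ev n) : T -> R) by apply: measurable_indic; exact: Ev_meas.
have mIc : measurable_fun setT (\1_(~` Ev n) : T -> R).
  by apply: measurable_indic; apply: measurableC; exact: Ev_meas.
rewrite /fv; mfun.
Qed.

Lemma fv_bnd n x : `|fv n x| <= expR (n%:R * (3 / 2)) + c.
Proof.
have /andP[h0 h1] := M_bnd n x.
have i0 := indic_ge0 (Ev n) x; have i1 := indic_le1 (Ev n) x.
have j0 := indic_ge0 (~` Ev n) x; have j1 := indic_le1 (~` Ev n) x.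
rewrite /fv ger0_norm; last by rewrite addr_ge0 // mulr_ge0 // ltW.
apply: lerD; first by rewrite -[leRHS]mulr1; apply: ler_pM.
by rewrite -[leRHS]mulr1; apply: ler_wpM2l => //; exact: ltW.
Qed.

Lemma fv_int n : Int (fv n). Proof. exact: int_bnd _ _ (fv_meas n) (fv_bnd n). Qed.

Lemma fv_le1 n : \int[P]_x fv n x <= 1.
Proof.
elim: n => [|n IH].
  rewrite (eq_Rintegral _ (g := fun _ => 1)); last first.
    move=> x _; rewrite /fv M0 /= indic1 // indic0' ?mulr0 ?addr0 ?mulr1 //.
    by move=> /(_ I).
  rewrite Rintegral_cst // [fine _](_ : _ = 1) ?mul1r //; exact: (congr1 fine (probability_setT P)).
pose H x := M n x * \1_(Ev n) x.
have mH : Gm n H.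
  apply: measurable_funM; first exact: M_Gm.
  exact: Gm_indic (Ev_F n).
have hb : forall x, 0 <= H x <= expR (n%:R * (3 / 2)).
  move=> x; have /andP[h0 h1] := M_bnd n x.
  have i0 := indic_ge0 (Ev n) x; have i1 := indic_le1 (Ev n) x.
  rewrite /H mulr_ge0 //= -[leRHS]mulr1; exact: ler_pM.
have sup := super n H _ mH hb.
have mHT := Gm_meas _ _ mH.
have mIc : measurable_fun setT (\1_(~` Ev n) : T -> R).
  by apply: measurable_indic; apply: measurableC; exact: Ev_meas.
have mZ := Gm_meas _ _ (Z_Gm n.+1 isT).
have iHe : Int (fun x => H x * expR (Z n.+1 x)).
  apply: (int_bnd _ (expR (n%:R * (3 / 2)) * expR (3 / 2))); first by mfun.
  move=> x; rewrite normrM (ger0_norm (expR_ge0 _)); have /andP[h0 h1] := hb x.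
  rewrite ger0_norm //; apply: ler_pM => //.
  by rewrite ler_expR Z_le.
have iIc : Int (fun x => c * \1_(~` Ev n) x).
  apply: (int_bnd _ c); first by mfun.
  move=> x; rewrite normrM (gtr0_norm c0) ger0_norm ?indic_ge0 //.
  by rewrite -[leRHS]mulr1 ler_wpM2l ?indic_le1 // ltW.
have iH : Int H.
  apply: (int_bnd _ (expR (n%:R * (3 / 2)))) => // x.
  by have /andP[h0 h1] := hb x; rewrite ger0_norm.
have pw : forall x, fv n.+1 x <= H x * expR (Z n.+1 x) + c * \1_(~` Ev n) x.
  move=> x; rewrite /fv /H MS.
  have [hx|hx] := pselect (Ev n x).
    rewrite (indic0' (~` Ev n)); last by move=> h; exact: h hx.
    rewrite (indic1 (Ev n)) // mulr1 mulr0 addr0.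
    have [hM|hM] := leP (M n x * expR (Z n.+1 x)) c.
      have hE : Ev n.+1 x by split => //=; rewrite MS.
      by rewrite (indic1 (Ev n.+1)) // (indic0' (~` Ev n.+1)) ?mulr0 ?addr0 ?mulr1 // => h; exact: h hE.
    have hE : ~ Ev n.+1 x by move=> [_ /=]; rewrite MS leNgt hM.
    rewrite (indic0' (Ev n.+1)) // (indic1 (~` Ev n.+1)) // mulr0 add0r mulr1.
    exact: ltW.
  have hE : ~ Ev n.+1 x by move=> [].
  rewrite (indic0' (Ev n.+1)) // (indic1 (~` Ev n.+1)) // (indic0' (Ev n)) //.
  by rewrite (indic1 (~` Ev n)) // !mulr0 !mul0r !add0r.
apply: le_trans IH.
have s1 : \int[P]_x fv n.+1 x <= \int[P]_x (H x * expR (Z n.+1 x) + c * \1_(~` Ev n) x).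
  apply: le_Rintegral; [exact: measurableT | exact: fv_int | exact: IntD | move=> x _; exact: pw].
apply: le_trans s1 _.
have -> : \int[P]_x fv n x = \int[P]_x H x + \int[P]_x (c * \1_(~` Ev n) x).
  by rewrite /fv -RintegralD.
by rewrite RintegralD // lerD2r.
Qed.


Lemma ville : (P [set w | forall t, (0 < t)%N -> (M t w <= c)%R] >= (1 - 1 / c)%:E)%E.
Proof.
have eq : [set w | forall t, (0 < t)%N -> M t w <= c] = \bigcap_n Ev n.
  apply/seteqP; split => w.
    move=> h n _; elim: n => [|n IH] //=; split => //; exact: h.
  by move=> h [|t] // _; have [] := h t.+1 I.
have hn : forall n, ((1 - 1 / c)%:E <= P (Ev n))%E.
  move=> n.
  have mC : measurable (~` Ev n) by apply: measurableC; exact: Ev_meas.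
  have mIc : measurable_fun setT (\1_(~` Ev n) : T -> R) by exact: measurable_indic.
  have iI : Int (\1_(~` Ev n) : T -> R).
    by apply: (int_bnd _ 1) => // x; rewrite ger0_norm ?indic_ge0 ?indic_le1.
  have hc : c * fine (P (~` Ev n)) <= 1.
    apply: le_trans (fv_le1 n).
    rewrite -Rint_indic // -RintegralZl //.
    apply: le_Rintegral => //.
    - apply: (int_bnd _ c); first by mfun.
      move=> x; rewrite normrM (gtr0_norm c0) ger0_norm ?indic_ge0 //.
      by rewrite -[leRHS]mulr1 ler_wpM2l ?indic_le1 // ltW.
    - exact: fv_int.
    - move=> x _; rewrite /fv lerDr; apply: mulr_ge0; last exact: indic_ge0.
      by have /andP[] := M_bnd n x.
  have fP : P (~` Ev n) = (fine (P (~` Ev n)))%:E by rewrite fineK // fin_num_measure.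
  rewrite -[Ev n]setCK probability_setC // fP -EFinB lee_fin lerB //.
  by rewrite ler_pdivlMr // mulrC.
rewrite eq.
have cv : (P \o Ev) @ \oo --> P (\bigcap_n Ev n).
  apply: nonincreasing_cvg_mu => [| | |m n mn].
  - by rewrite -ge0_fin_numE // fin_num_measure //; exact: Ev_meas.
  - exact: Ev_meas.
  - by apply: bigcapT_measurable => k; exact: Ev_meas.
  - by apply/subsetPset; exact: Ev_dec.
rewrite -(cvg_lim _ cv) //; apply: lime_ge; first exact: cvgP cv.
exact: nearW.
Qed.
End Ville.
End Super.
End Meas.

Section Alg.
Context {d : measure_display} {T : measurableType d} {R : realType}.
Variables (lam X : nat -> T -> R) (mu alpha sigma : R).

Lemma S0 (f : nat -> R) : S f 0 = 0. Proof. by rewrite /S big_geq. Qed.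
Lemma SS (f : nat -> R) t : S f t.+1 = S f t + f t.+1. Proof. by rewrite /S big_nat_recr. Qed.

Local Notation LL := (L X lam mu (sigma ^+ 2)).
Local Notation ZZ := (Z X lam mu (sigma ^+ 2)).

Lemma L_expand t w : LL t w = SlamX lam X t w - mu * Slam lam t w -
  (Slam2X2 lam X t w - 2 * mu * Slam2X lam X t w + mu ^+ 2 * Slam2 lam t w
   + 2 * sigma ^+ 2 * Slam2 lam t w) / 6.
Proof.
rewrite /SlamX /Slam /Slam2X2 /Slam2X /Slam2.
elim: t => [|t IH]; first by rewrite L0 !S0; ring.
by rewrite LS !SS IH Z_expand /=; field.
Qed.

Lemma Slam2_ge0 t w : 0 <= Slam2 lam t w.
Proof. by rewrite /Slam2 /S; apply: sumr_ge0 => i _; exact: sqr_ge0. Qed.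

Lemma L_zero t w : Slam2 lam t w = 0 -> LL t w = 0.
Proof.
elim: t => [|t IH]; first by rewrite L0.
move=> h; have h0 := Slam2_ge0 t w.
rewrite /Slam2 SS -/(Slam2 lam t w) in h.
have hl := sqr_ge0 (lam t.+1 w).
have h1 : Slam2 lam t w = 0 by lra.
have h2 : lam t.+1 w ^+ 2 = 0 by lra.
move/eqP: h2; rewrite sqrf_eq0 => /eqP h2.
by rewrite LS IH // /Z h2; ring.
Qed.

Lemma aCI_iff (U D s2 x : R) : 0 < s2 ->
  (aCI U D s2 x <-> (s2 / 3 * x - U) ^+ 2 < D).
Proof.
move=> s0; have a0 : 0 < s2 / 3 by rewrite divr_gt0.
rewrite /aCI; case: ifP => hD.
  split => // h; exfalso; have := sqr_ge0 (s2 / 3 * x - U); lra.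
have D0 : 0 <= D by rewrite leNgt hD.
have r0 := sqrtr_ge0 D; have r2 := sqr_sqrtr D0.
set r := Num.sqrt D in r0 r2 *.
rewrite /= ltr_pdivrMr // ltr_pdivlMr //.
split.
  move=> /andP[h1 h2]; rewrite -r2; nra.
move=> h; apply/andP; split; rewrite -r2 in h; nra.
Qed.

Lemma alg t w : 0 < alpha < 1 ->
  (aCIplus lam X alpha sigma t w mu <-> ln (2 / alpha) < LL t w).
Proof.
move=> /andP[a0 a1].
have ln0 : 0 < ln (2 / alpha).
  by apply: ln_gt0; rewrite ltr_pdivlMr // mul1r; lra.
have [s0|s0] : Slam2 lam t w = 0 \/ 0 < Slam2 lam t w.
  have := Slam2_ge0 t w; rewrite le_eqVlt => /orP[/eqP h|h]; [left; exact: esym h | right; exact: h].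
  rewrite L_zero // /aCIplus /aCI s0 mul0r invr0 !mulr0.
  by case: ifP => _; split => //=; try lra.
rewrite /aCIplus aCI_iff //.
rewrite -subr_gt0 -[in X in _ <-> X]subr_gt0.
have -> : Dplus lam X alpha sigma t w - (Slam2 lam t w / 3 * mu - Uplus lam X t w) ^+ 2
   = (2 * (Slam2 lam t w / 3)) * (LL t w - ln (2 / alpha)).
  by rewrite L_expand /Dplus /Uplus; field.
by rewrite pmulr_rgt0 // mulr_gt0 // divr_gt0.
Qed.

End Alg.

Section Minus.
Context {d : measure_display} {T : measurableType d} {R : realType}.
Variables (lam X : nat -> T -> R) (alpha sigma : R).

Lemma S_ext (f g : nat -> R) t : (forall i, f i = g i) -> S f t = S g t.
Proof. by move=> h; rewrite /S; apply: eq_bigr => i _; exact: h. Qed.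

Lemma S_neg (f : nat -> R) t : S (fun i => - f i) t = - S f t.
Proof. by rewrite /S sumrN. Qed.

Local Notation nl := (fun i w => - lam i w).

Lemma aCIminus_eq t w :
  aCIminus lam X alpha sigma t w = aCIplus nl X alpha sigma t w.
Proof.
have e1 : Slam nl t w = - Slam lam t w by rewrite /Slam S_neg.
have e2 : SlamX nl X t w = - SlamX lam X t w.
  by rewrite /SlamX -S_neg; apply: S_ext => i; rewrite mulNr.
have e3 : Slam2 nl t w = Slam2 lam t w by apply: S_ext => i; rewrite sqrrN.
have e4 : Slam2X nl X t w = Slam2X lam X t w by apply: S_ext => i; rewrite sqrrN.
have e5 : Slam2X2 nl X t w = Slam2X2 lam X t w by apply: S_ext => i; rewrite sqrrN.
have eU : Uplus nl X t w = Uminus lam X t w by rewrite /Uplus /Uminus e1 e4 opprK.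
rewrite /aCIminus /aCIplus /Dplus /Dminus eU e2 e3 e5 opprK.
done.
Qed.
End Minus.

Theorem lemma5 (d : measure_display) (T : measurableType d) (R : realType)
  (P : probability T R) (F : nat -> set (set T)) (X lam : nat -> T -> R)
  (mu sigma alpha : R) :
  filtration F ->
  F 0%N = [set set0; setT] ->
  (forall t, (0 < t)%N -> Gmeasurable (F t) (X t)) ->
  (forall t, (0 < t)%N -> is_cond_exp P (F t.-1) (X t) (fun _ => mu)) ->
  (forall t, (0 < t)%N -> exists Y : T -> R,
      is_cond_exp P (F t.-1) (fun w => (X t w - mu) ^+ 2) Y /\
      {ae P, forall w, Y w <= sigma ^+ 2}) ->
  0 < alpha < 1 ->
  (forall t, (0 < t)%N -> Gmeasurable (F t.-1) (lam t)) ->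
  (P [set w | forall t, (0 < t)%N -> ~ aCIplus lam X alpha sigma t w mu]
     >= (1 - alpha / 2)%:E)%E /\
  (P [set w | forall t, (0 < t)%N -> ~ aCIminus lam X alpha sigma t w mu]
     >= (1 - alpha / 2)%:E)%E.
Proof.
move=> hF _ hXm hmu hvar ha hlam.
have /andP[a0 a1] := ha.
have hX : forall t, (0 < t)%N -> Gm F t (X t).
  by move=> t t0; apply/(Gm_iff F hF); exact: hXm.
have c0 : 0 < 2 / alpha by rewrite divr_gt0.
have core : forall lm : nat -> T -> R, (forall t, (0 < t)%N -> Gm F t.-1 (lm t)) ->
    (P [set w | forall t, (0 < t)%N -> ~ aCIplus lm X alpha sigma t w mu]
     >= (1 - alpha / 2)%:E)%E.
  move=> lm hlm.
  have V := ville P F hF X lm mu (sigma ^+ 2) (sqr_ge0 sigma) hX hmu hvar hlm (2 / alpha) c0.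
  have e : 1 - 1 / (2 / alpha) = 1 - alpha / 2.
    field. all: try by rewrite ?(gt_eqF a0).
  rewrite e in V; move: V; congr (_ <= P _)%E.
  apply/funext => w; apply/propext; split => h t t0; have := h t t0.
    move=> hM; rewrite (alg lm X mu alpha sigma t w ha) -ltr_expR lnK ?posrE //.
    rewrite -/(M X lm mu (sigma ^+ 2) t w); apply/negP; rewrite -leNgt; exact: hM.
  rewrite (alg lm X mu alpha sigma t w ha) -ltr_expR lnK ?posrE //.
  rewrite -/(M X lm mu (sigma ^+ 2) t w) => /negP; rewrite -leNgt; exact.
split; first by apply: core => t t0; apply/(Gm_iff F hF); exact: hlam.
have -> : [set w | forall t, (0 < t)%N -> ~ aCIminus lam X alpha sigma t w mu] =
    [set w | forall t, (0 < t)%N -> ~ aCIplus (fun i w => - lam i w) X alpha sigma t w mu].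
  apply/funext => w; apply/propext; split => h t t0.
    by rewrite -aCIminus_eq; exact: h t t0.
  by rewrite aCIminus_eq; exact: h t t0.
apply: core => t t0; apply: measurable_funN; apply/(Gm_iff F hF); exact: hlam.
Qed.
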